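(* Let $X$ be an $E\mathcal M$-simplicial set. Then $X$ is a $*$-module if and only if $X$ is mild.
   Context: $\omega=\{1,2,3,\dots\}$ and $\mathcal M$ is the monoid of injective maps $\omega\to\omega$ under composition. For $A\subset\omega$, $\mathcal M_A\subset\mathcal M$ is the submonoid of injections fixing $A$ elementwise; $A$ is co-infinite if $\omega\setminus A$ is infinite. $E\mathcal M$ is the simplicial monoid with $(E\mathcal M)_n=\mathcal M^{1+n}=\mathrm{maps}(\{0,\dots,n\},\mathcal M)$, pointwise multiplication, simplicial structure maps by precomposition. An $E\mathcal M$-simplicial set is a simplicial set with a left $E\mathcal M$-action. For a set $S$, $E\mathrm{Inj}(S,\omega)$ is the simplicial set whose $m$-simplices are tuples $(f_0,\dots,f_m)$ of injections $S\to\omega$ (structure maps by precomposition in the index), with left $E\mathcal M$-action by postcomposition. For $x\in X_n$, $A\subset\omega$, $0\le k\le n$, $x$ is $k$-supported on $A$ if $i_k(u).x=x$ for all $u\in\mathcal M_A$, where $i_k\colon\mathcal M\to\mathcal M^{1+n}$ includes into the $(1+k)$-th factor. $X$ is mild if for every $n$, every $x\in X_n$ and every $0\le k\le n$ there is a co-infinite $A\subset\omega$ such that $x$ is $k$-supported on $A$. Operadic product: for $E\mathcal M$-simplicial sets $X_1,\dots,X_n$, let $E\mathrm{Inj}(n\times\omega,\omega)\times_{E\mathcal M^n}X_1\times\dots\times X_n$ be the quotient of $E\mathrm{Inj}(n\times\omega,\omega)\times X_1\times\dots\times X_n$ by the equivalence relation generated on $m$-simplices by $(f_0,\dots,f_m;u_1.x_1,\dots,u_n.x_n)\sim(f_0\circ(u_1^{(0)}\amalg\dots\amalg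 u_n^{(0)}),\dots,f_m\circ(u_1^{(m)}\amalg\dots\amalg u_n^{(m)});x_1,\dots,x_n)$ for all $u_i=(u_i^{(0)},\dots,u_i^{(m)})\in(E\mathcal M)_m$; it carries the $E\mathcal M$-action by postcomposition on the first factor. There is a natural map $\Phi$ to $X_1\times\dots\times X_n$ given on $m$-simplices by $\Phi[f_0,\dots,f_m;x_1,\dots,x_n]=((f_0\iota_1,\dots,f_m\iota_1).x_1,\dots,(f_0\iota_n,\dots,f_m\iota_n).x_n)$, where $\iota_j(t)=(j,t)$. An $E\mathcal M$-simplicial set $X$ is a $*$-module if $\Phi\colon E\mathrm{Inj}(2\times\omega,\omega)\times_{E\mathcal M^2}(X\times * )\to X\times *\cong X$ is an isomorphism ($*$ the terminal $E\mathcal M$-simplicial set). *)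

(* Defs.v *)
(* (ordinals 'I_(n.+1) index the vertices {0,...,n}). *)
From Stdlib Require Import Relation_Operators.
From mathcomp Require Import all_boot.
Set Implicit Arguments. Unset Strict Implicit. Unset Printing Implicit Defensive.

(* omega = {1,2,3,...} is represented by nat via t |-> t+1 (a relabelling
   bijection; injections, fixed sets and co-infiniteness are transported). *)

Definition injfun (A B : Type) := {f : A -> B | injective f}.

Lemma comp_injective (A B C : Type) (g : B -> C) (f : A -> B) :
  injective g -> injective f -> injective (fun a => g (f a)).
Proof. by move=> hg hf a b /hg /hf. Qed.

Definition comp_inj (A B C : Type) (g : injfun B C) (f : injfun A B) : injfun A C :=
  exist _ (fun a => sval g (sval f a)) (comp_injective (svalP g) (svalP f)).

Lemma id_injective (A : Type) : injective (fun a : A => a).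
Proof. by []. Qed.

Definition id_inj (A : Type) : injfun A A := exist _ (fun a => a) (@id_injective A).

Definition M := injfun nat nat.
Definition idM : M := id_inj nat.
Definition mulM (u v : M) : M := comp_inj u v.

Definition monotone m n (a : 'I_m.+1 -> 'I_n.+1) :=
  forall i j : 'I_m.+1, i <= j -> a i <= a j.

(** EM-simplicial sets: simplicial sets (contravariant functors on Delta,
    structure maps smap a : X_n -> X_m for monotone a : [m] -> [n]) with a
    left action of (E M)_n = maps([n], M) on X_n, compatible with the
    simplicial structure (structure maps of E M are precomposition). *)
Record EMsSet := {
  ob :> nat -> Type;
  smap : forall m n, ('I_m.+1 -> 'I_n.+1) -> ob n -> ob m;
  smap_id : forall n (x : ob n), smap (fun i => i) x = x;
  smap_comp : forall m n p (a : 'I_m.+1 -> 'I_n.+1) (b : 'I_n.+1 -> 'I_p.+1),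
      monotone a -> monotone b ->
      forall x : ob p, smap a (smap b x) = smap (fun i => b (a i)) x;
  act : forall n, ('I_n.+1 -> M) -> ob n -> ob n;
  act_id : forall n (x : ob n), act (fun _ => idM) x = x;
  act_mul : forall n (u v : 'I_n.+1 -> M) (x : ob n),
      act u (act v x) = act (fun j => mulM (u j) (v j)) x;
  act_nat : forall m n (a : 'I_m.+1 -> 'I_n.+1), monotone a ->
      forall (u : 'I_n.+1 -> M) (x : ob n),
      smap a (act u x) = act (fun i => u (a i)) (smap a x)
}.

Definition coinfinite (A : nat -> Prop) := forall N, exists t, N <= t /\ ~ A t.
Definition fixes (A : nat -> Prop) (u : M) := forall t, A t -> sval u t = t.

Definition incl n (k : 'I_n.+1) (u : M) : 'I_n.+1 -> M :=
  fun j => if j == k then u else idM.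

Definition k_supported (X : EMsSet) n (x : X n) (k : 'I_n.+1) (A : nat -> Prop) :=
  forall u : M, fixes A u -> @act X n (incl k u) x = x.

Definition mild (X : EMsSet) :=
  forall n (x : X n) (k : 'I_n.+1),
    exists (A : nat -> Prop), coinfinite A /\ k_supported x k A.

(** The operadic product E Inj(2 x omega, omega) x_{EM^2} (X x star).
    2 x omega is 'I_2 * nat; the factor j = 1,2 is ord0, ord_max. *)
Definition Inj2 := injfun ('I_2 * nat) nat.

Definition iota1_fun (t : nat) : 'I_2 * nat := (ord0, t).
Lemma iota1_injective : injective iota1_fun.
Proof. by move=> s t [->]. Qed.
Definition iota1 : injfun nat ('I_2 * nat) := exist _ iota1_fun iota1_injective.

Definition coprod_fun (u1 u2 : M) (p : 'I_2 * nat) : 'I_2 * nat :=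
  (p.1, if p.1 == ord0 then sval u1 p.2 else sval u2 p.2).
Lemma coprod_injective (u1 u2 : M) : injective (coprod_fun u1 u2).
Proof.
move=> [i s] [j t] [/= eij]; rewrite -eij; case: (i == ord0) => h.
  by rewrite (svalP u1 _ _ h).
by rewrite (svalP u2 _ _ h).
Qed.
Definition coprod (u1 u2 : M) : injfun ('I_2 * nat) ('I_2 * nat) :=
  exist _ (coprod_fun u1 u2) (@coprod_injective u1 u2).

(* m-simplices of E Inj(2 x omega, omega) x X x * (before the quotient);
   the terminal EM-simplicial set star is unit in every degree, trivial action *)
Definition PreProd (X : EMsSet) m := (('I_m.+1 -> Inj2) * X m * unit)%type.

(* generating relation:
   (f; u1.x, u2.star) ~ (f o (u1 amalg u2); x, star), with u2.star = star *)
Definition gen_rel (X : EMsSet) m (y1 y2 : PreProd X m) : Prop :=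
  exists (f : 'I_m.+1 -> Inj2) (u1 u2 : 'I_m.+1 -> M) (x : X m),
    y1 = (f, @act X m u1 x, tt) /\
    y2 = (fun j => comp_inj (f j) (coprod (u1 j) (u2 j)), x, tt).

Definition prod_equiv (X : EMsSet) m : PreProd X m -> PreProd X m -> Prop :=
  clos_refl_sym_trans (PreProd X m) (@gen_rel X m).

(* Phi on representatives: [f; x, star] |-> (f_0 iota_1, ..., f_m iota_1).x *)
Definition Phi (X : EMsSet) m (y : PreProd X m) : X m :=
  @act X m (fun j => comp_inj (y.1.1 j) iota1) y.1.2.

(* X is a star-module: the induced map Phi on the quotient is an isomorphism,
   i.e. bijective in every simplicial degree (Phi is a map of
   EM-simplicial sets, so levelwise bijectivity = isomorphism). *)
Definition star_module (X : EMsSet) :=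
  forall m,
    (forall x : X m, exists y : PreProd X m, Phi y = x) /\
    (forall y y' : PreProd X m, Phi y = Phi y' -> prod_equiv y y').

(* Main.v *)
Require Import Defs.
From Stdlib Require Import Relation_Operators ClassicalEpsilon FunctionalExtensionality ProofIrrelevance.
From mathcomp Require Import all_boot zify.
Set Implicit Arguments. Unset Strict Implicit. Unset Printing Implicit Defensive.

Definition chs {A : Type} (P : A -> Prop) (d : A) : A :=
  match excluded_middle_informative (exists x, P x) with
  | left h => proj1_sig (constructive_indefinite_description _ h)
  | right _ => d end.

Lemma chs_spec {A : Type} (P : A -> Prop) d : (exists x, P x) -> P (chs P d).
Proof.
rewrite /chs; case: excluded_middle_informative => // h _.
exact: proj2_sig (constructive_indefinite_description _ h).
Qed.

Lemma fchoice {A B : Type} (R : A -> B -> Prop) (b : B) :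
  (forall x, exists y, R x y) -> exists f : A -> B, forall x, R x (f x).
Proof. move=> h; exists (fun x => chs (R x) b) => x; exact: chs_spec. Qed.

Definition bP (P : Prop) : bool := if excluded_middle_informative P then true else false.
Lemma bPE (P : Prop) : bP P = true <-> P.
Proof. rewrite /bP; case: excluded_middle_informative => //. Qed.
Lemma bPF (P : Prop) : bP P = false <-> ~ P.
Proof. rewrite /bP; case: excluded_middle_informative => //. Qed.

Lemma eqI (A B : Type) (u v : injfun A B) : (forall t, sval u t = sval v t) -> u = v.
Proof.
case: u v => [f hf] [g hg] /= h.
have e : f = g by apply: functional_extensionality.
subst g; by rewrite (proof_irrelevance _ hf hg).
Qed.

Definition infs (P : nat -> Prop) := forall N, exists t, N <= t /\ P t.

Lemma inf_sub (P Q : nat -> Prop) : (forall t, P t -> Q t) -> infs P -> infs Q.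
Proof. move=> h hP N; case: (hP N) => t [h1 h2]; exists t; split => //; exact: h. Qed.

Definition cnt (P : nat -> Prop) (t : nat) := count (fun s => bP (P s)) (iota 0 t).

Lemma cntS P t : cnt P t.+1 = cnt P t + bP (P t).
Proof. by rewrite /cnt -addn1 iotaD count_cat /= addn0 add0n. Qed.

Lemma cnt0 P : cnt P 0 = 0. Proof. by []. Qed.

Lemma cnt_mono P s t : s <= t -> cnt P s <= cnt P t.
Proof.
elim: t => [|t ih]; first by rewrite leqn0 => /eqP ->.
rewrite leq_eqVlt => /orP [/eqP -> //|]; rewrite ltnS => /ih h.
by rewrite cntS; apply: leq_trans h (leq_addr _ _).
Qed.

Lemma cnt_lt P s t : P s -> s < t -> cnt P s < cnt P t.
Proof.
move=> hs hst; apply: leq_trans (cnt_mono P hst).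
by rewrite cntS (proj2 (bPE _) hs) addn1.
Qed.

Lemma cnt_inj P s t : P s -> P t -> cnt P s = cnt P t -> s = t.
Proof.
move=> hs ht e; case: (ltngtP s t) => // h.
  by move: (cnt_lt hs h); rewrite e ltnn.
by move: (cnt_lt ht h); rewrite e ltnn.
Qed.

Lemma cnt_unb P : infs P -> forall i, exists t, i <= cnt P t.
Proof.
move=> hP; elim=> [|i [t ht]]; first by exists 0.
case: (hP t) => s [hts hs]; exists s.+1.
rewrite cntS (proj2 (bPE _) hs) addn1 ltnS; exact: leq_trans ht (cnt_mono P hts).
Qed.

Lemma cnt_surj P : infs P -> forall i, exists t, P t /\ cnt P t = i.
Proof.
move=> hP i.
have ex : exists t, i < cnt P t by case: (cnt_unb hP i.+1) => t ht; exists t.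
case: (ex_minnP ex) => t ht hmin.
case: t ht hmin => [|s] ht hmin; first by rewrite cnt0 in ht.
have hs : cnt P s <= i by rewrite leqNgt; apply/negP => /hmin; rewrite ltnn.
move: ht; rewrite cntS; case e: (bP (P s)).
  move/bPE: e => e; rewrite addn1 ltnS => h; exists s; split => //; by apply/eqP; rewrite eqn_leq hs h.
move=> h; move: h hs; rewrite /=; lia.
Qed.

Definition enm (P : nat -> Prop) (i : nat) : nat := chs (fun t => P t /\ cnt P t = i) 0.

Lemma enm_spec P i : infs P -> P (enm P i) /\ cnt P (enm P i) = i.
Proof. move=> h; exact: (@chs_spec _ (fun t => P t /\ cnt P t = i) 0 (cnt_surj h i)). Qed.

Lemma enm_in P i : infs P -> P (enm P i).
Proof. by move=> h; case: (enm_spec i h). Qed.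

Lemma cnt_enm P i : infs P -> cnt P (enm P i) = i.
Proof. by move=> h; case: (enm_spec i h). Qed.

Lemma enm_cnt P t : infs P -> P t -> enm P (cnt P t) = t.
Proof. move=> h ht; apply: (@cnt_inj P) => //; [exact: enm_in | by rewrite cnt_enm]. Qed.

Lemma enm_inj P : infs P -> injective (enm P).
Proof. by move=> h i j e; rewrite -(cnt_enm i h) -(cnt_enm j h) e. Qed.

Lemma inj_unb (f : nat -> nat) : injective f -> forall N, exists t, N <= f t.
Proof.
move=> hf N; apply: NNPP => hn.
have lt : forall t, f t < N.
  move=> t; rewrite ltnNge; apply/negP => h; apply: hn; by exists t.
pose g (i : 'I_N.+1) : 'I_N := Ordinal (lt i).
have gi : injective g by move=> i j [/hf /val_inj].
by move: (leq_card g gi); rewrite !card_ord ltnn.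
Qed.

Lemma inf_img (f : nat -> nat) : injective f -> infs (fun s => exists i, f i = s).
Proof.
move=> hf N; case: (inj_unb hf N) => t ht; exists (f t); split => //; by exists t.
Qed.

Lemma inf_img_on (P : nat -> Prop) (f : nat -> nat) : infs P ->
  (forall s t, P s -> P t -> f s = f t -> s = t) ->
  infs (fun s => exists t, P t /\ f t = s).
Proof.
move=> hP hf.
have hg : injective (fun i => f (enm P i)).
  by move=> i j /hf e; apply: (enm_inj hP); apply: e; apply: enm_in.
apply: inf_sub (inf_img hg) => s [i <-]; exists (enm P i); split => //; exact: enm_in.
Qed.

Lemma inf_split (P Q : nat -> Prop) : infs P -> ~ infs (fun t => P t /\ Q t) ->
  infs (fun t => P t /\ ~ Q t).
Proof.
move=> hP hn.
have [N0 hN0] : exists N0, forall t, N0 <= t -> ~ (P t /\ Q t).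
  apply: NNPP => h; apply: hn => N; apply: NNPP => h2; apply: h; exists N => t ht hpq.
  by apply: h2; exists t.
move=> N; case: (hP (maxn N N0)) => t [ht hpt]; exists t; split.
  exact: leq_trans (leq_maxl _ _) ht.
split => // hq; apply: (hN0 t) => //; exact: leq_trans (leq_maxr _ _) ht.
Qed.

Lemma inf_odd_enm P : infs P -> infs (fun s => exists i, enm P (2 * i + 1) = s).
Proof. move=> h; apply: inf_img => i j /(enm_inj h) e; lia. Qed.



Definition nxt (F : nat -> nat -> nat) (r N : nat) := chs (fun t => is_true (N < F r t)) 0.
Fixpoint gpick (F : nat -> nat -> nat) (k : nat) : nat :=
  match k with
  | 0 => nxt F 0 0
  | S k' => nxt F (k'.+1 %% 4) (F (k' %% 4) (gpick F k'))
  end.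
Definition gval F k := F (k %% 4) (gpick F k).

Lemma gval_lt F : (forall r, r < 4 -> injective (F r)) -> forall k, gval F k < gval F k.+1.
Proof.
move=> hF k; rewrite /gval /=.
have hr : k.+1 %% 4 < 4 by rewrite ltn_pmod.
case: (inj_unb (hF _ hr) (F (k %% 4) (gpick F k)).+1) => t ht.
exact: (@chs_spec _ (fun t => is_true (F (k %% 4) (gpick F k) < F (k.+1 %% 4) t)) 0 (ex_intro _ t ht)).
Qed.

Lemma gval_mono F : (forall r, r < 4 -> injective (F r)) -> forall i j, i < j -> gval F i < gval F j.
Proof.
move=> hF i; elim=> [|j ih] //; rewrite ltnS leq_eqVlt => /orP [/eqP -> | h].
  exact: gval_lt.
exact: ltn_trans (ih h) (gval_lt hF j).
Qed.

Lemma gval_inj F : (forall r, r < 4 -> injective (F r)) -> injective (gval F).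
Proof.
move=> hF i j e; case: (ltngtP i j) => // h.
  by move: (gval_mono hF h); rewrite e ltnn.
by move: (gval_mono hF h); rewrite e ltnn.
Qed.

Definition gsel F r i := gpick F (4 * i + r).

Lemma greedy F : (forall r, r < 4 -> injective (F r)) -> forall r r' i i', r < 4 -> r' < 4 ->
  F r (gsel F r i) = F r' (gsel F r' i') -> r = r' /\ i = i'.
Proof.
move=> hF r r' i i' hr hr' e.
have e1 : forall r i, r < 4 -> F r (gsel F r i) = gval F (4 * i + r).
  move=> r0 i0 h0; rewrite /gval /gsel; congr (F _ _); rewrite mulnC modnMDl modn_small //.
rewrite (e1 _ _ hr) (e1 _ _ hr') in e; move/(gval_inj hF): e; lia.
Qed.

Lemma gsel_inj F : (forall r, r < 4 -> injective (F r)) -> forall r, r < 4 -> injective (gsel F r).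
Proof. move=> hF r hr i j e; have := @greedy F hF r r i j hr hr; rewrite e => h; by case: (h erefl). Qed.



Definition tsupp (X : EMsSet) m (z : X m) (A : 'I_m.+1 -> nat -> Prop) :=
  forall u : 'I_m.+1 -> M, (forall j, fixes (A j) (u j)) -> act u z = z.
Definition cinf m (A : 'I_m.+1 -> nat -> Prop) := forall j, coinfinite (A j).

Lemma act_ext (X : EMsSet) m (u v : 'I_m.+1 -> M) (z : X m) :
  (forall j t, sval (u j) t = sval (v j) t) -> act u z = act v z.
Proof.
move=> h; have -> // : u = v.
by apply: functional_extensionality => j; apply: eqI => t; apply: h.
Qed.

Lemma mulM_s (u v : M) t : sval (mulM u v) t = sval u (sval v t). Proof. by []. Qed.

Definition trunc m (u : 'I_m.+1 -> M) (r : nat) : 'I_m.+1 -> M :=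
  fun j => if j < r then u j else idM.

Lemma tsupp_of_k (X : EMsSet) m (z : X m) A :
  (forall k, k_supported z k (A k)) -> tsupp z A.
Proof.
move=> hk u hu.
have key : forall r, act (trunc u r) z = z.
  elim=> [|r ih].
    rewrite -[RHS](act_id z); apply: act_ext => j t; by rewrite /trunc ltn0.
  case: (ltnP r m.+1) => hr.
    pose k : 'I_m.+1 := Ordinal hr.
    have -> : act (trunc u r.+1) z = act (incl k (u k)) (act (trunc u r) z).
      rewrite act_mul; apply: act_ext => j t; rewrite /trunc /incl mulM_s.
      case: (eqVneq j k) => [-> | hjk] /=.
        by rewrite ltnSn ltnn.
      have : (j : nat) != r by move: hjk; apply: contra => /eqP e; apply/eqP; apply: val_inj.
      by rewrite ltnS leq_eqVlt => /negPf ->.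
    by rewrite ih; apply: hk; apply: hu.
  rewrite -[RHS]ih; apply: act_ext => j t; rewrite /trunc.
  have h1 : j < r by apply: leq_trans (ltn_ord j) hr.
  by rewrite h1 (ltn_trans h1 (ltnSn r)).
rewrite -[RHS](key m.+1); apply: act_ext => j t; by rewrite /trunc ltn_ord.
Qed.

Lemma mild_tsupp (X : EMsSet) : mild X -> forall m (z : X m), exists A, cinf A /\ tsupp z A.
Proof.
move=> hm m z.
case: (fchoice (fun _ => True) (hm m z)) => A hA.
exists A; split; first by move=> j; case: (hA j).
apply: tsupp_of_k => k; by case: (hA k).
Qed.

Definition dec (P : Prop) := excluded_middle_informative P.

Definition dfun (A : nat -> Prop) (a : M) (t : nat) : nat :=
  if dec (A t) then sval a t
  else enm (fun s => ~ exists t, A t /\ sval a t = s) (cnt (fun t => ~ A t) t).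

Lemma img_compl_inf (A : nat -> Prop) (a : M) : coinfinite A ->
  infs (fun s => ~ exists t, A t /\ sval a t = s).
Proof.
move=> hA.
have h := inf_img_on (f := sval a) hA (fun s t _ _ e => svalP a s t e).
apply: inf_sub h => s [t [ht <-]] [t' [ht' e]].
by move: (svalP a _ _ e) => et; subst t'.
Qed.

Lemma dfun_inj A a : coinfinite A -> injective (dfun A a).
Proof.
move=> hA s t; have hR := img_compl_inf a hA.
rewrite /dfun; case: dec => hs; case: dec => ht /= e.
- exact: (svalP a).
- have := enm_in (cnt (fun t => ~ A t) t) hR; rewrite -e => hn.
  by case: hn; exists s.
- have := enm_in (cnt (fun t => ~ A t) s) hR; rewrite e => hn.
  by case: hn; exists t.
- move/(enm_inj hR): e => e; exact: (cnt_inj hs ht e).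
Qed.

Lemma dfun_surj A a : coinfinite A -> forall s, exists t, dfun A a t = s.
Proof.
move=> hA s; have hR := img_compl_inf a hA.
case: (classic (exists t, A t /\ sval a t = s)) => [[t [ht <-]] | hn].
  by exists t; rewrite /dfun; case: dec.
exists (enm (fun t => ~ A t) (cnt (fun s => ~ exists t, A t /\ sval a t = s) s)).
have hC : ~ A (enm (fun t => ~ A t) (cnt (fun s => ~ exists t, A t /\ sval a t = s) s)).
  exact: (enm_in _ hA).
rewrite /dfun; case: dec => [h|_] /=; first by case: hC.
rewrite (cnt_enm _ hA); exact: enm_cnt.
Qed.

Definition dM (A : nat -> Prop) (a : M) (hA : coinfinite A) : M :=
  exist _ (dfun A a) (@dfun_inj A a hA).

Lemma factor_through (A : nat -> Prop) (d a : M) :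
  (forall s, exists t, sval d t = s) -> (forall t, A t -> sval d t = sval a t) ->
  exists s : M, fixes A s /\ forall t, sval d (sval s t) = sval a t.
Proof.
move=> hs hda.
pose g t := chs (fun x => sval d x = sval a t) 0.
have hg : forall t, sval d (g t) = sval a t.
  move=> t; exact: (@chs_spec _ (fun x => sval d x = sval a t) 0 (hs _)).
have gi : injective g.
  by move=> t t' e; apply: (svalP a); rewrite -!hg e.
exists (exist _ g gi); split => // t ht /=.
apply: (svalP d); by rewrite hg hda.
Qed.

Lemma SL (X : EMsSet) m (z : X m) A : cinf A -> tsupp z A ->
  forall a b : 'I_m.+1 -> M, (forall j t, A j t -> sval (a j) t = sval (b j) t) ->
  act a z = act b z.
Proof.
move=> hA hz a b hab.
have ex : forall j, exists dst : M * M * M,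
    fixes (A j) dst.1.2 /\ fixes (A j) dst.2 /\
    (forall t, sval dst.1.1 (sval dst.1.2 t) = sval (a j) t) /\
    (forall t, sval dst.1.1 (sval dst.2 t) = sval (b j) t).
  move=> j; pose d := @dM (A j) (a j) (hA j).
  have hs := @dfun_surj (A j) (a j) (hA j).
  have hda : forall t, A j t -> sval d t = sval (a j) t.
    by move=> t ht; rewrite /= /dfun; case: dec.
  have hdb : forall t, A j t -> sval d t = sval (b j) t.
    by move=> t ht; rewrite hda // hab.
  case: (@factor_through (A j) d (a j) hs hda) => s [hs1 hs2].
  case: (@factor_through (A j) d (b j) hs hdb) => s' [hs1' hs2'].
  by exists (d, s, s').
case: (fchoice (idM, idM, idM) ex) => f hf.
have e1 : act a z = act (fun j => (f j).1.1) z.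
  transitivity (act (fun j => mulM (f j).1.1 (f j).1.2) z).
    apply: act_ext => j t; rewrite mulM_s; by case: (hf j) => _ [_ [-> _]].
  rewrite -act_mul hz // => j; by case: (hf j).
have e2 : act b z = act (fun j => (f j).1.1) z.
  transitivity (act (fun j => mulM (f j).1.1 (f j).2) z).
    apply: act_ext => j t; rewrite mulM_s; by case: (hf j) => _ [_ [_ ->]].
  rewrite -act_mul hz // => j; by case: (hf j) => _ [].
by rewrite e1 e2.
Qed.



Definition agree (B : nat -> Prop) (u v : M) := forall t, B t -> sval u t = sval v t.

Lemma chain_W (B B' W : nat -> Prop) (u : M) : coinfinite B -> coinfinite B' ->
  fixes (fun t => B t /\ B' t) u -> infs W ->
  (forall s, W s -> ~ exists t, B t /\ sval u t = s) ->
  infs (fun s => ~ B' s /\ ~ (exists t, ~ B t /\ enm W (2 * t) = s)) ->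
  exists u1 u2 u3 : M, agree B u1 u /\ agree B' u2 u1 /\ agree B u3 u2 /\ agree B' u3 idM.
Proof.
move=> hB hB' hu hW hWR hZ.
set Z := (fun s => ~ B' s /\ ~ (exists t, ~ B t /\ enm W (2 * t) = s)) in hZ.
pose f1 t := if dec (B t) then sval u t else enm W (2 * t).
have i1 : injective f1.
  move=> s t; rewrite /f1; case: dec => hs; case: dec => ht /= e.
  - exact: (svalP u).
  - by case: (hWR _ (enm_in (2 * t) hW)); exists s.
  - by case: (hWR _ (enm_in (2 * s) hW)); exists t.
  - move/(enm_inj hW): e; lia.
pose u1 : M := exist _ f1 i1.
pose f2 t := if dec (B' t) then f1 t else enm Z t.
have i2 : injective f2.
  have key : forall s t, B' s -> ~ B' t -> f1 s <> enm Z t.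
    move=> s t hs ht e; case: (enm_in t hZ) => hz1 hz2.
    move: e; rewrite /f1; case: dec => hbs /= e.
      by apply: hz1; rewrite -e hu.
    by apply: hz2; exists s.
  move=> s t; rewrite /f2; case: dec => hs; case: dec => ht /= e.
  - exact: (i1 s t e).
  - by case: (key _ _ hs ht).
  - by case: (key _ _ ht hs).
  - exact: (enm_inj hZ).
pose u2 : M := exist _ f2 i2.
pose f3 t := if dec (B' t) then t else enm Z t.
have i3 : injective f3.
  move=> s t; rewrite /f3; case: dec => hs; case: dec => ht /= e.
  - by [].
  - by case: (enm_in t hZ); rewrite -e.
  - by case: (enm_in s hZ); rewrite e.
  - exact: (enm_inj hZ).
pose u3 : M := exist _ f3 i3.
exists u1, u2, u3; split; last split; last split.
- by move=> t ht; rewrite /= /f1; case: dec.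
- by move=> t ht; rewrite /= /f2; case: dec.
- move=> t ht; rewrite /= /f3 /f2; case: dec => // hb' /=.
  rewrite /f1; case: dec => [_|hn] /=; [by symmetry; apply: hu | by case: hn].
- by move=> t ht; rewrite /= /f3; case: dec.
Qed.

Lemma chain (B B' : nat -> Prop) (u : M) : coinfinite B -> coinfinite B' ->
  fixes (fun t => B t /\ B' t) u ->
  exists u1 u2 u3 : M, agree B u1 u /\ agree B' u2 u1 /\ agree B u3 u2 /\ agree B' u3 idM.
Proof.
move=> hB hB' hu.
have hR := img_compl_inf u hB.
set R := (fun s => ~ exists t, B t /\ sval u t = s) in hR.
case: (classic (infs (fun s => R s /\ B' s))) => hc.
  apply: (@chain_W B B' (fun s => R s /\ B' s)) => //.
    by move=> s [].
  apply: inf_sub hB' => s hs; split => // [[t [_ e]]].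
  by case: (enm_in (2 * t) hc); rewrite e.
have hW := inf_split hR hc.
apply: (@chain_W B B' (fun s => R s /\ ~ B' s)) => //.
  by move=> s [].
apply: inf_sub (inf_odd_enm hW) => s [i <-]; split.
  by case: (enm_in (2 * i + 1) hW).
move=> [t [_ /(enm_inj hW)]]; lia.
Qed.

Lemma tsupp_cap (X : EMsSet) m (z : X m) B B' : cinf B -> cinf B' -> tsupp z B -> tsupp z B' ->
  tsupp z (fun j t => B j t /\ B' j t).
Proof.
move=> hB hB' hz hz' u hu.
have ex : forall j, exists w : M * M * M,
   agree (B j) w.1.1 (u j) /\ agree (B' j) w.1.2 w.1.1 /\ agree (B j) w.2 w.1.2 /\ agree (B' j) w.2 idM.
  move=> j; case: (chain (hB j) (hB' j) (hu j)) => u1 [u2 [u3 h]]; by exists (u1, u2, u3).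
case: (fchoice (idM, idM, idM) ex) => w hw.
have e1 : act u z = act (fun j => (w j).1.1) z.
  apply: (SL hB hz) => j t ht; by case: (hw j) => h _; rewrite h.
have e2 : act (fun j => (w j).1.1) z = act (fun j => (w j).1.2) z.
  apply: (SL hB' hz') => j t ht; by case: (hw j) => _ [h _]; rewrite h.
have e3 : act (fun j => (w j).1.2) z = act (fun j => (w j).2) z.
  apply: (SL hB hz) => j t ht; by case: (hw j) => _ [_ [h _]]; rewrite h.
have e4 : act (fun j => (w j).2) z = act (fun _ => idM) z.
  apply: (SL hB' hz') => j t ht; by case: (hw j) => _ [_ [_ h]]; rewrite h.
by rewrite e1 e2 e3 e4 act_id.
Qed.



Definition o1 : 'I_2 := @Ordinal 2 1 isT.
Lemma I2_cases (i : 'I_2) : i = ord0 \/ i = o1.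
Proof. case: i => [[|[|k]] h]; [left | right | by []]; exact: val_inj. Qed.
Lemma o10 : (o1 == ord0) = false. Proof. by []. Qed.

Lemma sm_mild (X : EMsSet) : star_module X -> mild X.
Proof.
move=> hs n x k.
case: ((hs n).1 x) => [[[f x'] []]] hx.
rewrite /Phi /= in hx.
exists (fun t => exists s, sval (f k) (ord0, s) = t); split.
  move=> N.
  have hi : injective (fun s => sval (f k) (o1, s)).
    by move=> s t /(svalP (f k)) [].
  case: (inj_unb hi N) => t ht; exists (sval (f k) (o1, t)); split => // [[s]].
  by move/(svalP (f k)) => [].
move=> u hu; rewrite -hx act_mul; apply: act_ext => j t; rewrite mulM_s /incl.
case: eqP => [-> | _] //; apply: hu; by exists t.
Qed.

Definition stdfun (A : nat -> Prop) (p : 'I_2 * nat) : nat :=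
  if p.1 == ord0 then (if dec (A p.2) then p.2 else enm (fun t => ~ A t) (2 * cnt (fun t => ~ A t) p.2))
  else enm (fun t => ~ A t) (2 * p.2 + 1).

Lemma stdfun_inj A : coinfinite A -> injective (stdfun A).
Proof.
move=> hA [i s] [i' s']; rewrite /stdfun /=.
have nA : forall k, ~ A (enm (fun t => ~ A t) k) by move=> k; exact: (enm_in k hA).
case: (I2_cases i) => ->; case: (I2_cases i') => -> /=; rewrite ?o10 ?eqxx.
- case: dec => hs; case: dec => hs' /= e.
  + by rewrite e.
  + by case: (nA (2 * cnt (fun t => ~ A t) s')); rewrite -e.
  + by case: (nA (2 * cnt (fun t => ~ A t) s)); rewrite e.
  + move/(enm_inj hA): e => e; rewrite (@cnt_inj (fun t => ~ A t) s s') //; lia.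
- case: dec => hs /= e.
  + by case: (nA (2 * s' + 1)); rewrite -e.
  + move/(enm_inj hA): e; lia.
- case: dec => hs' /= e.
  + by case: (nA (2 * s + 1)); rewrite e.
  + move/(enm_inj hA): e; lia.
- move/(enm_inj hA) => e; have -> : s = s' by lia. by [].
Qed.

Definition std (A : nat -> Prop) (hA : coinfinite A) : Inj2 := exist _ (stdfun A) (stdfun_inj hA).

Lemma std_fix (A : nat -> Prop) (hA : coinfinite A) : fixes A (comp_inj (std hA) iota1).
Proof. by move=> t ht; rewrite /= /stdfun /=; case: dec. Qed.

Lemma mild_surj (X : EMsSet) : mild X -> forall m (x : X m), exists y : PreProd X m, Phi y = x.
Proof.
move=> hm m x; case: (mild_tsupp hm x) => A [hA hx].
exists (fun j => std (hA j), x, tt); rewrite /Phi /=.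
apply: hx => j; exact: std_fix.
Qed.



Definition Kf (P : Inj2) (A : nat -> Prop) (p : 'I_2 * nat) : nat :=
  if p.1 == ord0 then
    (if dec (exists t, sval P (ord0, stdfun A (ord0, t)) = p.2) then p.2
     else sval P (ord0, enm (fun t => ~ A t) (2 * p.2 + 1)))
  else sval P p.

Lemma Kf_inj (P : Inj2) A : coinfinite A -> injective (Kf P A).
Proof.
move=> hA [i s] [i' s']; rewrite /Kf /=.
have Pi := svalP P.
case: (I2_cases i) => ->; case: (I2_cases i') => -> /=; rewrite ?o10 ?eqxx.
- case: dec => hs; case: dec => hs' /= e.
  + by rewrite e.
  + case: hs => t ht; rewrite -ht in e; move/Pi: e => [] e.
    have e' : stdfun A ((ord0 : 'I_2), t) = stdfun A (o1, s') by rewrite e.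
    by move/(stdfun_inj hA): e' => [].
  + case: hs' => t ht; rewrite -ht in e; move/Pi: e => [] e.
    have e' : stdfun A ((ord0 : 'I_2), t) = stdfun A (o1, s) by rewrite -e.
    by move/(stdfun_inj hA): e' => [].
  + move/Pi: e => [] /(enm_inj hA) e; have -> : s = s' by lia. by [].
- case: dec => hs /= e.
  + by case: hs => t ht; rewrite -ht in e; move/Pi: e => [].
  + by move/Pi: e => [].
- case: dec => hs' /= e.
  + by case: hs' => t ht; rewrite -ht in e; move/Pi: e => [].
  + by move/Pi: e => [].
- by move/Pi => [->].
Qed.

Definition KM (P : Inj2) (A : nat -> Prop) (hA : coinfinite A) : Inj2 :=
  exist _ (Kf P A) (@Kf_inj P A hA).

Lemma stepA (X : EMsSet) m (z : X m) A (p : 'I_m.+1 -> Inj2) (hA : cinf A) : tsupp z A ->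
  exists K : 'I_m.+1 -> Inj2, prod_equiv (p, z, tt) (K, Phi (p, z, tt), tt) /\
    (forall j t, A j t -> sval (K j) (ord0, sval (p j) (ord0, t)) = sval (p j) (ord0, t)).
Proof.
move=> hz.
pose a j := comp_inj (std (hA j)) iota1.
pose p' j := comp_inj (p j) (coprod (a j) idM).
pose w j := comp_inj (p' j) iota1.
pose K j := KM (p j) (hA j).
exists K; split; last first.
  move=> j t ht; rewrite /= /Kf /=; case: dec => // hn; case: hn; exists t.
  by rewrite /stdfun /=; case: dec.
have E1 : prod_equiv (p, z, tt) (p', z, tt).
  apply: rst_step; exists p, a, (fun _ => idM), z; split => //.
  by rewrite hz // => j; exact: std_fix.
have E2 : prod_equiv (K, act w z, tt) (fun j => comp_inj (K j) (coprod (w j) idM), z, tt).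
  apply: rst_step; by exists K, w, (fun _ => idM), z.
have e1 : (fun j => comp_inj (K j) (coprod (w j) idM)) = p'.
  apply: functional_extensionality => j; apply: eqI => -[i s].
  case: (I2_cases i) => -> /=; rewrite /Kf /= ?eqxx ?o10 //.
  case: dec => // hn; case: hn; by exists s.
have e2 : act w z = Phi (p, z, tt).
  rewrite /Phi /=.
  transitivity (act (fun j => mulM (comp_inj (p j) iota1) (a j)) z); first by apply: act_ext.
  by rewrite -act_mul hz // => j; exact: std_fix.
rewrite e1 e2 in E2.
rewrite /prod_equiv in E1 E2 *; eapply rst_trans; [exact E1 | apply: rst_sym; exact E2].
Qed.

Lemma img_supp (X : EMsSet) m (z : X m) A (p : 'I_m.+1 -> Inj2) : cinf A -> tsupp z A ->
  tsupp (Phi (p, z, tt)) (fun j s => exists t, A j t /\ sval (p j) (ord0, t) = s) /\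
  cinf (fun j s => exists t, A j t /\ sval (p j) (ord0, t) = s).
Proof.
move=> hA hz; split.
  move=> u hu; rewrite /Phi /= act_mul.
  apply: (SL hA hz) => j t ht; rewrite mulM_s /=; apply: hu; by exists t.
move=> j N.
have hi : injective (fun s => sval (p j) (o1, s)) by move=> s t /(svalP (p j)) [].
case: (inj_unb hi N) => t ht; exists (sval (p j) (o1, t)); split => // [[s [_]]].
by move/(svalP (p j)) => [].
Qed.



Lemma h2 k : (k.*2)./2 = k. Proof. exact: (half_bit_double k false). Qed.
Lemma h2S k : (k.*2.+1)./2 = k. Proof. exact: (half_bit_double k true). Qed.
Lemma o2S k : odd (k.*2.+1) = true. Proof. by rewrite /= odd_double. Qed.

Definition cfun (B : nat -> Prop) (g : nat -> nat) (t : nat) : nat :=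
  if dec (B t) then t else enm (fun t => ~ B t) (g (cnt (fun t => ~ B t) t)).

Lemma cfun_inj B g : coinfinite B -> injective g -> injective (cfun B g).
Proof.
move=> hB hg s t; rewrite /cfun; case: dec => hs; case: dec => ht /= e //.
- by case: (enm_in (g (cnt (fun t => ~ B t) t)) hB); rewrite -e.
- by case: (enm_in (g (cnt (fun t => ~ B t) s)) hB); rewrite e.
- by move/(enm_inj hB)/hg: e => e; apply: (@cnt_inj (fun t => ~ B t)).
Qed.


Definition cM (B : nat -> Prop) (g : nat -> nat) (hB : coinfinite B) (hg : injective g) : M :=
  exist _ (cfun B g) (@cfun_inj B g hB hg).

Lemma cM_fix B g hB hg : fixes B (@cM B g hB hg).
Proof. by move=> t ht; rewrite /= /cfun; case: dec. Qed.

Definition nM (g : nat -> nat) (hg : injective g) : M := exist _ g hg.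

Lemma dbl_inj : injective (fun t => t.*2). Proof. move=> s t; rewrite -!mul2n; lia. Qed.
Lemma dblS_inj : injective (fun t => t.*2.+1). Proof. move=> s t; rewrite -!mul2n; lia. Qed.

Definition inj2_0 : Inj2 := exist _ (fun p : 'I_2 * nat => stdfun (fun _ => False) p)
  (@stdfun_inj (fun _ => False) (fun N => ex_intro _ N (conj (leqnn N) (fun x => x)))).


Definition Ff (K L : Inj2) (C : nat -> Prop) (r i : nat) : nat :=
  match r with
  | 0 => sval K (ord0, enm C i)
  | 1 => sval K (o1, i)
  | 2 => sval L (ord0, enm C i)
  | _ => sval L (o1, i)
  end.

Definition Nf (K L : Inj2) (B : nat -> Prop) (p : 'I_2 * nat) : nat :=
  let C := fun t => ~ B t in
  let F := Ff K L C in
  let s := gsel F in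
  if p.1 == ord0 then
    (if dec (B p.2) then p.2
     else (if odd (cnt C p.2) then F 2 (s 2 (cnt C p.2)./2) else F 0 (s 0 (cnt C p.2)./2)))
  else (if odd p.2 then F 3 (s 3 p.2./2) else F 1 (s 1 p.2./2)).

Definition code (B : nat -> Prop) (p : 'I_2 * nat) : nat * nat :=
  if p.1 == ord0 then (if odd (cnt (fun t => ~ B t) p.2) then 2 else 0, (cnt (fun t => ~ B t) p.2)./2)
  else (if odd p.2 then 3 else 1, p.2./2).

Lemma Ff_inj K L B : coinfinite B -> forall r, r < 4 -> injective (Ff K L (fun t => ~ B t) r).
Proof.
move=> hB [|[|[|[|r]]]] // _ x y /=.
- by move/(svalP K) => [] /(enm_inj hB).
- by move/(svalP K) => [].
- by move/(svalP L) => [] /(enm_inj hB).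
- by move/(svalP L) => [].
Qed.

Lemma Nf_code K L B p : ~ (p.1 = ord0 /\ B p.2) ->
  Nf K L B p = Ff K L (fun t => ~ B t) (code B p).1 (gsel (Ff K L (fun t => ~ B t)) (code B p).1 (code B p).2).
Proof.
case: p => i s /=; rewrite /Nf /code /=.
case: (I2_cases i) => -> /= hn; rewrite ?eqxx ?o10.
  case: dec => hs; first by case: hn.
  by case: (odd _).
by case: (odd s).
Qed.

Lemma code_lt B p : (code B p).1 < 4.
Proof. rewrite /code; case: (_ == _); case: (odd _) => //. Qed.

Lemma Ff_notB K L B : coinfinite B -> (forall s, B s -> sval K (ord0, s) = s) ->
  (forall s, B s -> sval L (ord0, s) = s) ->
  forall r x, r < 4 -> ~ B (Ff K L (fun t => ~ B t) r x).
Proof.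
move=> hB hK hL [|[|[|[|r]]]] x // _ /= hb.
- move/(svalP K): (hK _ hb) => [] e; rewrite e in hb; exact: (enm_in x hB hb).
- by move/(svalP K): (hK _ hb) => [].
- move/(svalP L): (hL _ hb) => [] e; rewrite e in hb; exact: (enm_in x hB hb).
- by move/(svalP L): (hL _ hb) => [].
Qed.

Lemma code_inj B p p' : coinfinite B -> ~ (p.1 = ord0 /\ B p.2) -> ~ (p'.1 = ord0 /\ B p'.2) ->
  code B p = code B p' -> p = p'.
Proof.
case: p p' => i s [i' s'] hB /= hn hn'; rewrite /code /=.
have oh : forall k k', odd k = odd k' -> k./2 = k'./2 -> k = k'.
  by move=> k k' e1 e2; rewrite -(odd_double_half k) -(odd_double_half k') e1 e2.
case: (I2_cases i) => ei; case: (I2_cases i') => ei'; subst i i'; rewrite /= ?eqxx ?o10.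
- have hs : ~ B s by move=> h; apply: hn.
  have hs' : ~ B s' by move=> h; apply: hn'.
  case e1: (odd _); case e2: (odd _) => //= -[e3].
  + by rewrite (@cnt_inj (fun t => ~ B t) s s') // (oh _ _ (etrans e1 (esym e2)) e3).
  + by rewrite (@cnt_inj (fun t => ~ B t) s s') // (oh _ _ (etrans e1 (esym e2)) e3).
- by case: (odd _); case: (odd _).
- by case: (odd _); case: (odd _).
- case e1: (odd s); case e2: (odd s') => //= -[e3].
  + by rewrite (oh _ _ (etrans e1 (esym e2)) e3).
  + by rewrite (oh _ _ (etrans e1 (esym e2)) e3).
Qed.

Lemma Nf_inj K L B : coinfinite B -> (forall s, B s -> sval K (ord0, s) = s) ->
  (forall s, B s -> sval L (ord0, s) = s) -> injective (Nf K L B).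
Proof.
move=> hB hK hL p p'.
have hF := @Ff_inj K L B hB.
have nB := Ff_notB hB hK hL.
case: (classic (p.1 = ord0 /\ B p.2)) => hp; case: (classic (p'.1 = ord0 /\ B p'.2)) => hp'.
- case: p p' hp hp' => i s [i' s'] /= [-> hs] [-> hs']; rewrite /Nf /=.
  case: dec => [h1|//]; case: dec => [h2|//] /= e; by rewrite e.
- rewrite (Nf_code _ _ hp'); case: p hp => i s /= [-> hs]; rewrite /Nf /=.
  case: dec => [h1|//] /= e; exfalso; apply: (nB (code B p').1 (gsel (Ff K L (fun t => ~ B t)) (code B p').1 (code B p').2) (code_lt B p')); by rewrite -e.
- rewrite (Nf_code _ _ hp); case: p' hp' => i s /= [-> hs]; rewrite /Nf /=.
  case: dec => [h1|//] /= e; exfalso; apply: (nB (code B p).1 (gsel (Ff K L (fun t => ~ B t)) (code B p).1 (code B p).2) (code_lt B p)); by rewrite e.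
- rewrite (Nf_code _ _ hp) (Nf_code _ _ hp') => e.
  case: (greedy hF (code_lt B p) (code_lt B p') e) => e1 e2.
  apply: code_inj hp hp' _ => //; by rewrite [code B p]surjective_pairing [code B p']surjective_pairing e1 e2.
Qed.

Lemma final_comb (B : nat -> Prop) (K L : Inj2) : coinfinite B ->
  (forall s, B s -> sval K (ord0, s) = s) -> (forall s, B s -> sval L (ord0, s) = s) ->
  exists w : ((M * M) * (M * M) * (M * M)) * Inj2,
   fixes B w.1.1.1.1 /\ fixes B w.1.1.2.1 /\ fixes B w.1.2.1 /\ fixes B w.1.2.2 /\
   comp_inj K (coprod w.1.1.1.1 w.1.1.1.2) = comp_inj w.2 (coprod w.1.2.1 (nM dbl_inj)) /\
   comp_inj L (coprod w.1.1.2.1 w.1.1.2.2) = comp_inj w.2 (coprod w.1.2.2 (nM dblS_inj)).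
Proof.
move=> hB hK hL.
have hF := @Ff_inj K L B hB.
have hs : forall r, r < 4 -> injective (gsel (Ff K L (fun t => ~ B t)) r) := gsel_inj hF.
pose c := cM hB (hs 0 isT).
pose d := nM (hs 1 isT).
pose c' := cM hB (hs 2 isT).
pose d' := nM (hs 3 isT).
pose e := cM hB dbl_inj.
pose e' := cM hB dblS_inj.
pose N : Inj2 := exist _ (Nf K L B) (Nf_inj hB hK hL).
exists ((c, d), (c', d'), (e, e'), N).
do 4 (split; first by move=> t ht; rewrite /= /cfun; case: dec).
split.
- apply: (@eqI ('I_2 * nat) nat) => -[i s]; rewrite /= /coprod_fun /=.
  case: (I2_cases i) => -> /=; rewrite ?eqxx ?o10 /c /d /e /= /Nf /cfun /=.
    case: dec => hs0 /=; first by case: dec => [h1|//] /=; rewrite hK.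
    set k := cnt (fun t => ~ B t) s.
    case: dec => [hb|hnb] /=; first by case: (enm_in (k.*2) hB hb).
    by rewrite (cnt_enm _ hB) odd_double h2.
  by rewrite odd_double h2.
- apply: (@eqI ('I_2 * nat) nat) => -[i s]; rewrite /= /coprod_fun /=.
  case: (I2_cases i) => -> /=; rewrite ?eqxx ?o10 /c' /d' /e' /= /Nf /cfun /=.
    case: dec => hs0 /=; first by case: dec => [h1|//] /=; rewrite hL.
    set k := cnt (fun t => ~ B t) s.
    case: dec => [hb|hnb] /=; first by case: (enm_in (k.*2.+1) hB hb).
    by rewrite (cnt_enm _ hB) o2S h2S.
  by rewrite odd_double /= uphalf_half odd_double h2.
Qed.



Lemma final_equiv (X : EMsSet) m (y : X m) B (K L : 'I_m.+1 -> Inj2) : cinf B -> tsupp y B ->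
  (forall j s, B j s -> sval (K j) (ord0, s) = s) -> (forall j s, B j s -> sval (L j) (ord0, s) = s) ->
  prod_equiv (K, y, tt) (L, y, tt).
Proof.
move=> hB hy hK hL.
have ex := fun j => final_comb (hB j) (hK j) (hL j).
case: (fchoice (idM, idM, (idM, idM), (idM, idM), inj2_0) ex) => w hw.
pose c j := (w j).1.1.1.1. pose d j := (w j).1.1.1.2.
pose c' j := (w j).1.1.2.1. pose d' j := (w j).1.1.2.2.
pose e j := (w j).1.2.1. pose e' j := (w j).1.2.2. pose N j := (w j).2.
have S1 : prod_equiv (K, y, tt) (fun j => comp_inj (K j) (coprod (c j) (d j)), y, tt).
  apply: rst_step; exists K, c, d, y; split => //.
  by rewrite hy // => j; case: (hw j).
have S2 : prod_equiv (N, y, tt) (fun j => comp_inj (N j) (coprod (e j) (nM dbl_inj)), y, tt).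
  apply: rst_step; exists N, e, (fun _ => nM dbl_inj), y; split => //.
  by rewrite hy // => j; case: (hw j) => _ [_ []].
have S3 : prod_equiv (N, y, tt) (fun j => comp_inj (N j) (coprod (e' j) (nM dblS_inj)), y, tt).
  apply: rst_step; exists N, e', (fun _ => nM dblS_inj), y; split => //.
  by rewrite hy // => j; case: (hw j) => _ [_ [_ []]].
have S4 : prod_equiv (L, y, tt) (fun j => comp_inj (L j) (coprod (c' j) (d' j)), y, tt).
  apply: rst_step; exists L, c', d', y; split => //.
  by rewrite hy // => j; case: (hw j) => _ [].
have E1 : (fun j => comp_inj (K j) (coprod (c j) (d j))) = (fun j => comp_inj (N j) (coprod (e j) (nM dbl_inj))).
  apply: functional_extensionality => j; by case: (hw j) => _ [_ [_ [_ []]]].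
have E2 : (fun j => comp_inj (L j) (coprod (c' j) (d' j))) = (fun j => comp_inj (N j) (coprod (e' j) (nM dblS_inj))).
  apply: functional_extensionality => j; by case: (hw j) => _ [_ [_ [_ [_ ]]]].
rewrite E1 in S1; rewrite E2 in S4.
rewrite /prod_equiv in S1 S2 S3 S4 *.
eapply rst_trans; [exact S1|]. eapply rst_trans; [apply: rst_sym; exact S2|]. eapply rst_trans; [exact S3|]. apply: rst_sym; exact S4.
Qed.

Theorem theorem2p24 (X : EMsSet) : star_module X <-> mild X.
Proof.
split; first exact: sm_mild.
move=> hm m; split; first exact: mild_surj.
move=> [[p z] []] [[q z'] []] hPhi.
case: (mild_tsupp hm z) => A [hA hz].
case: (mild_tsupp hm z') => A' [hA' hz'].
case: (stepA p hA hz) => K [E1 HK].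
case: (stepA q hA' hz') => L [E2 HL].
case: (img_supp p hA hz) => hs1 hc1.
case: (img_supp q hA' hz') => hs2 hc2.
rewrite -hPhi in E2 hs2.
set y := Phi (p, z, tt) in E1 E2 hs1 hs2 *.
have hB : cinf (fun j s => (exists t, A j t /\ sval (p j) (ord0, t) = s) /\
                          (exists t, A' j t /\ sval (q j) (ord0, t) = s)).
  move=> j; apply: inf_sub (hc1 j) => s hn [h _]; exact: hn h.
have hsB := tsupp_cap hc1 hc2 hs1 hs2.
have F := final_equiv hB hsB (K := K) (L := L).
have F' : prod_equiv (K, y, tt) (L, y, tt).
  apply: F.
    by move=> j s [[t [ht <-]] _]; exact: HK.
  by move=> j s [_ [t [ht <-]]]; exact: HL.
rewrite /prod_equiv in E1 E2 F' *.
eapply rst_trans; [exact E1|]. eapply rst_trans; [exact F'|]. apply: rst_sym; exact E2.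
Qed.
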